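(* Let $m\ge 11$ be odd and let $t_1\ge 2$ be an integer with $3t_1\le m-4$ and $m-3t_1$ even. Then $\rho(F_0(t_1,\tfrac{m-3t_1}{2},0))<\rho(F_0(1,\tfrac{m-3}{2},0))$, where $\rho(F_0(1,\frac{m-3}{2},0))$ is the largest root of $x^4-x^3+(1-m)x^2+(m-3)x+m-3=0$ and $\rho(F_0(t_1,\frac{m-3t_1}{2},0))$ is the largest root of $x^4-x^3+(t_1-m)x^2+(m-3t_1)x-3t_1^2+mt_1=0$.
   Context: $\rho(G)$ denotes the largest eigenvalue of the adjacency matrix of $G$. For integers $t_1\ge0$, $t_2\ge 1$, the graph $F_0(t_1,t_2,0)$ consists of a central vertex $u^*$, $t_1$ triangles $u^*a_ib_i$ ($i=1,\dots,t_1$) sharing only $u^*$, and further vertices $v,u_1,\dots,u_{t_2}$ with each $u_j$ adjacent to both $u^*$ and $v$; there are no other vertices or edges. It has $3t_1+2t_2$ edges. In particular $F_0(1,t_2,0)$ is $K_{2,t_2}$ with a triangle attached at a vertex of maximum degree. *)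

(* Defs.v *)
From HB Require Import structures.
From mathcomp Require Import all_boot all_order all_algebra.
Set Implicit Arguments. Unset Strict Implicit. Unset Printing Implicit Defensive.
Import Order.TTheory GRing.Theory Num.Theory.
Local Open Scope ring_scope.

(* Vertices of F_0(t1,t2,0) are 'I_(F0n t1 t2), labelled as:
   0 = u*, 1..t1 = a_i, t1+1..2t1 = b_i, 2t1+1 = v, 2t1+2..2t1+1+t2 = u_j. *)
Definition F0n (t1 t2 : nat) : nat := (2 * t1 + t2 + 2)%N.

Definition F0edge (t1 t2 i j : nat) : bool :=
  [|| (i == 0%N) && (1 <= j <= 2 * t1)%N,
      [&& (1 <= i <= t1)%N & j == (i + t1)%N],
      (i == 0%N) && (2 * t1 + 2 <= j < F0n t1 t2)%N
    | (i == 2 * t1 + 1)%N && (2 * t1 + 2 <= j < F0n t1 t2)%N ].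

Definition F0adj (R : nzRingType) (t1 t2 : nat) : 'M[R]_(F0n t1 t2) :=
  \matrix_(i, j) (F0edge t1 t2 i j || F0edge t1 t2 j i)%:R.

Definition is_spectral_radius (R : realFieldType) (n : nat) (A : 'M[R]_n) (r : R) : Prop :=
  eigenvalue A r /\ forall y, eigenvalue A y -> y <= r.

Definition is_largest_root (R : realFieldType) (p : {poly R}) (r : R) : Prop :=
  root p r /\ forall y, root p y -> y <= r.

(* Main.v *)
Require Import Defs.
From HB Require Import structures.
From mathcomp Require Import all_boot all_order all_algebra.
From mathcomp Require Import polyrcf.
From mathcomp Require Import zify ring lra.
Import Order.TTheory GRing.Theory Num.Theory.
Local Open Scope ring_scope.

Section G.
Variable R : rcfType.
Variables t1 t2 : nat.
Local Notation n := (F0n t1 t2).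
Definition adjn (i j : nat) := F0edge t1 t2 i j || F0edge t1 t2 j i.

Lemma col_sum (v : 'rV[R]_n) (g : nat -> R) (j : 'I_n) :
  (forall i : 'I_n, v 0 i = g i) ->
  (v *m F0adj R t1 t2) 0 j = \sum_(0 <= i < n) (if adjn i j then g i else 0).
Proof.
move=> hg; rewrite !mxE big_mkord; apply: eq_bigr => i _.
by rewrite mxE hg /adjn; case: (_ || _); rewrite ?mulr1 ?mulr0.
Qed.

Lemma sum_range (h : nat -> R) a b c d : (a <= b)%N -> (b <= c)%N -> (c <= d)%N ->
  (forall i, (a <= i < b)%N -> h i = 0) -> (forall i, (c <= i < d)%N -> h i = 0) ->
  \sum_(a <= i < d) h i = \sum_(b <= i < c) h i.
Proof.
move=> ab bc cd h1 h2.
rewrite (@big_cat_nat _ _ _ b) /=; [|lia|lia].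
rewrite (@big_cat_nat _ _ _ c b d) /=; [|lia|lia].
rewrite big1_seq ?add0r; last by move=> i /andP[_]; rewrite mem_iota => hi; apply: h1; lia.
rewrite [X in _ + X]big1_seq ?addr0 //.
by move=> i /andP[_]; rewrite mem_iota => hi; apply: h2; lia.
Qed.

Lemma sum_point (x : R) a c b : (a <= c < b)%N ->
  \sum_(a <= i < b) (if i == c then x else 0) = x.
Proof.
move=> hc; rewrite (@sum_range _ a c c.+1 b); try lia.
- by rewrite big_nat1 eqxx.
- by move=> i hi; case: eqP => //; lia.
- by move=> i hi; case: eqP => //; lia.
Qed.

Definition Ssum (g : nat -> R) := \sum_(1 <= i < (2 * t1).+1) g i.
Definition Usum (g : nat -> R) := \sum_((2 * t1).+2 <= i < n) g i.

Lemma C0 (g : nat -> R) : \sum_(0 <= i < n) (if adjn i 0 then g i else 0) = Ssum g + Usum g.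
Proof.
rewrite (@big_cat_nat _ _ _ (2*t1).+1) /=; try (rewrite /F0n; lia).
congr (_ + _).
- rewrite (@sum_range _ 0 1 (2*t1).+1 (2*t1).+1) //; last first.
  + by move=> i hi; rewrite /adjn /F0edge; case: ifP => //; lia.
  + by move=> i hi; rewrite /adjn /F0edge; case: ifP => //; lia.
  rewrite /Ssum; apply: eq_big_nat => i hi.
  by rewrite /adjn /F0edge ifT //; lia.
- rewrite (@sum_range _ (2*t1).+1 (2*t1).+2 n n) //; try (rewrite /F0n; lia); last first.
  + by move=> i hi; rewrite /adjn /F0edge; case: ifP => //; lia.
  rewrite /Usum; apply: eq_big_nat => i hi.
  by rewrite /adjn /F0edge ifT //; lia.
Qed.
Lemma two_point (g : nat -> R) j c1 c2 : (c1 != c2)%N -> (c1 < n)%N -> (c2 < n)%N ->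
  (forall i, (i < n)%N -> adjn i j -> (i == c1) || (i == c2)) ->
  adjn c1 j -> adjn c2 j ->
  \sum_(0 <= i < n) (if adjn i j then g i else 0) = g c1 + g c2.
Proof.
move=> hne h1 h2 hadj a1 a2.
rewrite (@eq_big_nat _ _ _ _ _ _ (fun i => (if i == c1 then g c1 else 0) + (if i == c2 then g c2 else 0))).
  by rewrite big_split /= !sum_point //; apply/andP; split.
move=> i hi.
case: (i =P c1) => [->|n1].
  by rewrite a1 (negbTE hne) addr0.
case: (i =P c2) => [->|n2].
  by rewrite a2 add0r.
case E: (adjn i j); rewrite ?addr0 //.
have /orP[/eqP e|/eqP e] := hadj i (leq_trans (andP hi).2 (leqnn _)) E.
  by case: n1.
by case: n2.
Qed.

Lemma Ca (g : nat -> R) j : (1 <= j <= t1)%N ->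
  \sum_(0 <= i < n) (if adjn i j then g i else 0) = g 0%N + g (j + t1)%N.
Proof.
move=> hj; apply: two_point; rewrite /F0n; try lia.
- move=> i hi; rewrite /adjn /F0edge => /orP[H|H].
    by move: H => /or4P[]/andP[? ?]; lia.
  by move: H => /or4P[]/andP[? ?]; lia.
- rewrite /adjn /F0edge (_ : (1 <= j <= 2 * t1)%N = true); last lia; by rewrite ?eqxx ?andbT ?orbT.
- rewrite /adjn /F0edge (_ : (1 <= j <= t1)%N = true); last lia; by rewrite ?eqxx ?andbT ?orbT.
Qed.

Lemma Cb (g : nat -> R) j : (t1 < j <= 2 * t1)%N ->
  \sum_(0 <= i < n) (if adjn i j then g i else 0) = g 0%N + g (j - t1)%N.
Proof.
move=> hj; apply: two_point; rewrite /F0n; try lia.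
- move=> i hi; rewrite /adjn /F0edge => /orP[H|H].
    by move: H => /or4P[]/andP[? ?]; lia.
  by move: H => /or4P[]/andP[? ?]; lia.
- rewrite /adjn /F0edge (_ : (1 <= j <= 2 * t1)%N = true); last lia; by rewrite ?eqxx ?andbT ?orbT.
- rewrite /adjn /F0edge (_ : (1 <= j - t1 <= t1)%N = true); last lia.
  rewrite (_ : (j == j - t1 + t1)%N = true); last lia.
  by rewrite ?eqxx ?andbT ?orbT.
Qed.

Lemma Cu (g : nat -> R) j : ((2 * t1).+2 <= j < n)%N ->
  \sum_(0 <= i < n) (if adjn i j then g i else 0) = g 0%N + g (2 * t1).+1.
Proof.
move=> hj; apply: two_point; rewrite /F0n in hj *; try lia.
- move=> i hi; rewrite /adjn /F0edge => /orP[H|H].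
    by move: H => /or4P[]/andP[? ?]; lia.
  by move: H => /or4P[]/andP[? ?]; lia.
- rewrite /adjn /F0edge (_ : (2 * t1 + 2 <= j < F0n t1 t2)%N = true); last (rewrite /F0n; lia); by rewrite ?eqxx ?andbT ?orbT.
- rewrite /adjn /F0edge (_ : (2 * t1 + 2 <= j < F0n t1 t2)%N = true); last (rewrite /F0n; lia).
  rewrite (_ : ((2 * t1).+1 == 2 * t1 + 1)%N = true); last lia.
  by rewrite ?eqxx ?andbT ?orbT.
Qed.

Lemma Cv (g : nat -> R) : \sum_(0 <= i < n) (if adjn i (2 * t1).+1 then g i else 0) = Usum g.
Proof.
rewrite (@sum_range _ 0 (2*t1).+2 n n) //; try (rewrite /F0n; lia).
- rewrite /Usum; apply: eq_big_nat => i hi.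
  by rewrite /adjn /F0edge ifT //; rewrite /F0n in hi *; lia.
- by move=> i hi; rewrite /adjn /F0edge; case: ifP => //; lia.
Qed.

Definition Pq (y : R) := y ^+ 4 - y ^+ 3 - 2 * (t1%:R + t2%:R) * y ^+ 2
  + 2 * t2%:R * y + 2 * t1%:R * t2%:R.

Lemma Ssum_split (g : nat -> R) :
  Ssum g = \sum_(1 <= i < t1.+1) (g i + g (i + t1)%N).
Proof.
rewrite /Ssum (@big_cat_nat _ _ _ t1.+1) /=; try lia.
rewrite big_split /=; congr (_ + _).
have -> : t1.+1 = (1 + t1)%N by lia.
rewrite big_addn; apply: congr_big_nat => //; lia.
Qed.

Lemma eig_root (y : R) : (1 <= t2)%N -> 1 < y ->
  eigenvalue (F0adj R t1 t2) y -> Pq y = 0.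
Proof.
move=> ht2 hy /eigenvalueP [v hv vnz].
pose g k := oapp (fun i : 'I_n => v 0 i) 0 (insub k).
have gE : forall i : 'I_n, v 0 i = g i by move=> i; rewrite /g valK.
have E : forall k (hk : (k < n)%N),
    \sum_(0 <= i < n) (if adjn i k then g i else 0) = y * g k.
  move=> k hk; rewrite -(@col_sum v g (Ordinal hk) gE) hv mxE gE //.
have n0 : (0 < n)%N by rewrite /F0n; lia.
have E0 := E 0%N n0; rewrite C0 in E0.
have Ea : forall k, (1 <= k <= t1)%N -> g 0%N + g (k + t1)%N = y * g k.
  by move=> k hk; rewrite -Ca // E //; rewrite /F0n; lia.
have Eb : forall k, (t1 < k <= 2 * t1)%N -> g 0%N + g (k - t1)%N = y * g k.
  by move=> k hk; rewrite -Cb // E //; rewrite /F0n; lia.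
have Eu : forall k, ((2 * t1).+2 <= k < n)%N -> g 0%N + g (2 * t1).+1 = y * g k.
  by move=> k hk; rewrite -(@Cu g k hk) E //; lia.
have Ev : Usum g = y * g (2 * t1).+1.
  by rewrite -Cv E //; rewrite /F0n; lia.
set X0 := g 0%N in E0 Ea Eb Eu; set V := g (2 * t1).+1 in Eu Ev.
have HS : (y - 1) * Ssum g = 2 * t1%:R * X0.
  rewrite Ssum_split mulr_sumr.
  rewrite (@eq_big_nat _ _ _ _ _ _ (fun _ => 2 * X0)).
    by rewrite sumr_const_nat -mulr_natl subn1 /=; ring.
  move=> i hi; have h1 := Ea i hi.
  have h2 := Eb (i + t1)%N; rewrite (_ : (i + t1 - t1 = i)%N) in h2; last lia.
  have {}h2 := h2 ltac:(lia).
  rewrite mulrDr !mulrBl !mul1r -h1 -h2; ring.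
have HU : y * Usum g = t2%:R * (X0 + V).
  rewrite /Usum mulr_sumr.
  rewrite (@eq_big_nat _ _ _ _ _ _ (fun _ => X0 + V)).
    rewrite sumr_const_nat.
    have -> : (F0n t1 t2 - (2*t1).+2 = t2)%N by rewrite /F0n; lia.
    by rewrite mulr_natl.
  by move=> i hi; rewrite -Eu.
have E1 : y ^+ 2 * V - t2%:R * (X0 + V) = 0.
  by rewrite -HU Ev; ring.
have E2 : y * (y - 1) * X0 - 2 * t1%:R * X0 - y * (y - 1) * V = 0.
  rewrite -HS; have e : y * X0 = Ssum g + y * V by rewrite -Ev E0.
  have -> : y * (y - 1) * X0 = (y - 1) * (y * X0) by ring.
  rewrite e; ring.
have HP : Pq y * V = 0.
  rewrite -[RHS](_ : t2%:R * 0 + (y ^+ 2 - y - 2 * t1%:R) * 0 = 0); last by ring.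
  rewrite -{1}E2 -E1 /Pq; ring.
have [V0|] := eqVneq V 0; last first.
  by move=> Vn; move/eqP: HP; rewrite mulf_eq0 (negbTE Vn) orbF => /eqP.
exfalso; move/negP: vnz; apply; apply/eqP.
have t2n : t2%:R != 0 :> R by rewrite pnatr_eq0 -lt0n.
have X00 : X0 = 0.
  move: E1; rewrite V0 mulr0 addr0 sub0r => /eqP; rewrite oppr_eq0 mulf_eq0.
  by rewrite (negbTE t2n) /= => /eqP.
have yn : y != 0 by apply/eqP => y0; move: hy; rewrite y0 ltr10.
have y2 : y ^+ 2 - 1 != 0.
  rewrite subr_eq0; apply/eqP => e.
  have : 1 < y ^+ 2 by rewrite -[1](expr1n R 2) ltrXn2r // ?ler01.
  by rewrite e ltxx.
have Z : forall k, (k < n)%N -> g k = 0.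
  move=> k hk.
  have [k0|kp] := eqVneq k 0%N; first by rewrite k0.
  have [kv|kv] := eqVneq k (2 * t1).+1; first by rewrite kv.
  case: (leqP k t1) => hk1.
    have h1 := Ea k ltac:(lia).
    have h2 := Eb (k + t1)%N ltac:(lia); rewrite (_ : (k + t1 - t1 = k)%N) in h2; last lia.
    rewrite X00 add0r in h1; rewrite X00 add0r in h2.
    have : g k * (y ^+ 2 - 1) = y * (y * g k) - g k by ring.
    rewrite -h1 -h2 subrr.
    by move/eqP; rewrite mulf_eq0 (negbTE y2) orbF => /eqP.
  case: (leqP k (2 * t1)) => hk2.
    have h1 := Eb k ltac:(lia).
    have h2 := Ea (k - t1)%N ltac:(lia); rewrite (_ : (k - t1 + t1 = k)%N) in h2; last lia.
    rewrite X00 add0r in h1; rewrite X00 add0r in h2.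
    have : g k * (y ^+ 2 - 1) = y * (y * g k) - g k by ring.
    rewrite -h1 -h2 subrr.
    by move/eqP; rewrite mulf_eq0 (negbTE y2) orbF => /eqP.
  have h := Eu k ltac:(lia).
  rewrite X00 -/V V0 addr0 in h.
  by move/eqP: h; rewrite eq_sym mulf_eq0 (negbTE yn) /= => /eqP.
apply/rowP => i; rewrite gE mxE; apply: Z; exact: ltn_ord.
Qed.

Lemma root_eig (y : R) : (1 <= t2)%N -> 1 < y -> Pq y = 0 ->
  eigenvalue (F0adj R t1 t2) y.
Proof.
move=> ht2 hy hP.
have t2n : t2%:R != 0 :> R by rewrite pnatr_eq0 -lt0n.
have y1n : y - 1 != 0 by rewrite subr_eq0; apply/eqP => e; move: hy; rewrite e ltxx.
pose X0 := y ^+ 2 / t2%:R - 1.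
pose xa := X0 / (y - 1).
pose g k := if k == 0%N then X0 else if (k <= 2 * t1)%N then xa
            else if k == (2 * t1).+1 then 1 else y / t2%:R.
pose v := \row_(i < n) g i.
have gE : forall i : 'I_n, v 0 i = g i by move=> i; rewrite mxE.
have HS : Ssum g = xa *+ (2 * t1).
  rewrite /Ssum (@eq_big_nat _ _ _ _ _ _ (fun _ => xa)).
    by rewrite sumr_const_nat subn1.
  move=> i hi; rewrite /g ifF; last lia.
  by rewrite ifT //; lia.
have HU : Usum g = y.
  rewrite /Usum (@eq_big_nat _ _ _ _ _ _ (fun _ => y / t2%:R)).
    rewrite sumr_const_nat.
    have -> : (F0n t1 t2 - (2*t1).+2 = t2)%N by rewrite /F0n; lia.
    rewrite -mulr_natl; field; exact: t2n.
  move=> i hi; rewrite /g ifF; last lia.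
  rewrite ifF; last lia.
  by rewrite ifF //; lia.
apply/eigenvalueP; exists v; last first.
  have hk : ((2 * t1).+1 < n)%N by rewrite /F0n; lia.
  apply/negP => /eqP v0; have := congr1 (fun w : 'rV[R]_n => w 0 (Ordinal hk)) v0.
  rewrite !mxE /g /= ifF; last lia.
  by rewrite eqxx => /eqP; rewrite oner_eq0.
apply/rowP => j; rewrite (@col_sum v g j gE) !mxE.
case: j => k hk /=.
have [k0|kn0] := eqVneq k 0%N.
  rewrite k0 C0 HS HU /g /= -mulr_natl.
  apply/eqP; rewrite -subr_eq0; apply/eqP.
  have -> : (2 * t1)%:R * xa + y - y * X0 = - Pq y / (t2%:R * (y - 1)).
    rewrite /xa /X0 /Pq natrM; field; by rewrite t2n y1n.
  by rewrite hP oppr0 mul0r.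
case: (leqP k t1) => hk1.
  rewrite Ca; last lia.
  rewrite /g eqxx ifF; last lia.
  rewrite ifT; last lia.
  rewrite ifF; last lia.
  rewrite ifT; last lia.
  rewrite /xa; field; exact: y1n.
case: (leqP k (2 * t1)) => hk2.
  rewrite Cb; last lia.
  rewrite /g eqxx ifF; last lia.
  rewrite ifT; last lia.
  rewrite ifF; last lia.
  rewrite ifT; last lia.
  rewrite /xa; field; exact: y1n.
have [kv|kv] := eqVneq k (2 * t1).+1.
  rewrite kv Cv HU /g ifF; last lia.
  by rewrite eqxx mulr1.
rewrite Cu; last (rewrite /F0n in hk *; lia).
rewrite /g /= eqxx (negbTE kn0) (negbTE kv) ifF; last lia.
rewrite ifF; last lia.
rewrite /X0; field; exact: t2n.
Qed.
End G.
Lemma seq_max (R : rcfType) (s : seq R) x : x \in s ->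
  exists2 r, r \in s & forall y, y \in s -> y <= r.
Proof.
elim: s x => [//|a s IH] x _.
case: s IH => [|b s] IH.
  by exists a => [|y]; rewrite ?mem_seq1 ?eqxx // => /eqP ->.
have [r rin rmax] := IH b (mem_head _ _).
case: (leP a r) => har.
  exists r; first by rewrite in_cons rin orbT.
  by move=> y; rewrite in_cons => /orP[/eqP->|/rmax].
exists a; first by rewrite mem_head.
move=> y; rewrite in_cons => /orP[/eqP->//|/rmax hy].
exact: le_trans hy (ltW har).
Qed.

Lemma largest_root (R : rcfType) (p : {poly R}) x : p != 0 -> root p x ->
  exists r, x <= r /\ is_largest_root p r.
Proof.
move=> pn rx.
set B := cauchy_bound p.
have inB : forall y, root p y -> y \in roots p (- B) B.
  by move=> y ry; apply: root_in_roots => //; apply: root_in_cauchy_bound.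
have [r rin rmax] := @seq_max R _ x (inB x rx).
exists r; split; first exact: rmax (inB x rx).
split; first exact: root_roots rin.
by move=> y /inB; apply: rmax.
Qed.

Lemma ivt_root (R : rcfType) (p : {poly R}) a b : a <= b -> p.[a] < 0 -> 0 < p.[b] ->
  exists x, a < x /\ root p x.
Proof.
move=> ab pa pb.
have [x /andP[ax xb] rx] := @poly_ivt R p a b ab ltac:(by rewrite (ltW pa) (ltW pb)).
exists x; split => //.
rewrite lt_neqAle ax andbT; apply/eqP => e; move: rx; rewrite -e /root.
by rewrite (lt_eqF pa).
Qed.

Lemma horner4 (R : rcfType) (a b c y : R) :
  ('X^4 - 'X^3 + a *: 'X^2 + b *: 'X + c%:P).[y] =
  y ^+ 4 - y ^+ 3 + a * y ^+ 2 + b * y + c.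
Proof. by rewrite !hornerE. Qed.

Lemma natfacts (m t1 : nat) : (11 <= m)%N -> odd m -> (2 <= t1)%N ->
  (3 * t1 <= m - 4)%N -> ~~ odd (m - 3 * t1) ->
  (3 * t1 + 2 * ((m - 3 * t1) %/ 2) = m)%N /\ (3 + 2 * ((m - 3) %/ 2) = m)%N.
Proof.
move=> hm ho ht h3 he.
have e1 := odd_double_half (m - 3 * t1); rewrite (negbTE he) -divn2 -mul2n in e1.
have e2 := odd_double_half m; rewrite ho -divn2 -mul2n in e2.
split; lia.
Qed.

Lemma Pq_big (R : rcfType) t1 t2 m (Y : R) : (3 * t1 + 2 * t2 = m)%N -> (11 <= m)%N ->
  m%:R <= Y -> 0 < Pq R t1 t2 Y.
Proof.
move=> hm h11 hY.
have hS : 2 * (t1%:R + t2%:R) <= Y.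
  apply: le_trans hY; rewrite -natrD -[2]/(2%:R) -natrM ler_nat; lia.
have h11R : 11 <= Y by apply: le_trans hY; rewrite -[11]/(11%:R) ler_nat.
have t1p : 0 <= t1%:R :> R by [].
have t2p : 0 <= t2%:R :> R by [].
have q : 0 < Y ^+ 2 - Y - 2 * (t1%:R + t2%:R) by nra.
have q2 : 0 < Y ^+ 2 * (Y ^+ 2 - Y - 2 * (t1%:R + t2%:R)) by apply: mulr_gt0 => //; nra.
have q3 : 0 <= 2 * t2%:R * Y + 2 * t1%:R * t2%:R by nra.
rewrite /Pq; nra.
Qed.

Lemma sq_gt1 (R : rcfType) (a t : R) : 0 <= a -> a ^+ 2 = t -> 2 <= t -> 1 < a.
Proof. move=> h0 <-; nra. Qed.
Lemma sq_lt (R : rcfType) (a t : R) : 1 < a -> a ^+ 2 = t -> a < t.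
Proof. move=> h0 <-; nra. Qed.

Lemma Pq1_3 (R : rcfType) T : Pq R 1 T 3 = 36 - 10 * T%:R.
Proof. rewrite /Pq; ring. Qed.
Lemma lin_neg (R : rcfType) (T : R) : 4 <= T -> 36 - 10 * T < 0.
Proof. move=> h; lra. Qed.

Lemma diff_neg (R : rcfType) (t1 t2 T : nat) (y : R) : (3 + 2 * T = 3 * t1 + 2 * t2)%N ->
  (2 <= t1)%N -> (2 <= t2)%N -> 3 < y -> Pq R t1 t2 y = 0 -> Pq R 1 T y < 0.
Proof.
move=> hT h1 h2 hy h0.
have e : (3:R) + 2 * T%:R = 3 * t1%:R + 2 * t2%:R.
  have := congr1 (fun k => k%:R : R) hT; rewrite /= !natrD => H; lra.
have id : Pq R 1 T y - Pq R t1 t2 y + (t1%:R - 1) * (y ^+ 2 - 3 * y + 2 * t2%:R - 3)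
   = (- y ^+ 2 + y + 1) * ((3 + 2 * T%:R) - (3 * t1%:R + 2 * t2%:R)).
  rewrite /Pq; ring.
rewrite e subrr mulr0 h0 subr0 in id.
have t1R : 2 <= t1%:R :> R by rewrite -[2]/(2%:R) ler_nat.
have t2R : 2 <= t2%:R :> R by rewrite -[2]/(2%:R) ler_nat.
have p : 0 < (t1%:R - 1) * (y ^+ 2 - 3 * y + 2 * t2%:R - 3) by apply: mulr_gt0; nra.
lra.
Qed.

Theorem mainTheorem11 (R : rcfType) (m t1 : nat)
  (hm : (11 <= m)%N) (hodd : odd m) (ht1 : (2 <= t1)%N)
  (h3 : (3 * t1 <= m - 4)%N) (hev : ~~ odd (m - 3 * t1)) :
  exists r1 r2 : R,
    [/\ is_spectral_radius (F0adj R t1 ((m - 3 * t1) %/ 2)) r1,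
        is_spectral_radius (F0adj R 1 ((m - 3) %/ 2)) r2,
        is_largest_root ('X^4 - 'X^3 + (t1%:R - m%:R) *: 'X^2
                          + (m%:R - 3 * t1%:R) *: 'X
                          + (- 3 * t1%:R ^+ 2 + m%:R * t1%:R)%:P) r1,
        is_largest_root ('X^4 - 'X^3 + (1 - m%:R) *: 'X^2
                          + (m%:R - 3) *: 'X + (m%:R - 3)%:P) r2
      & r1 < r2].
Proof.
have [hA hB] := @natfacts m t1 hm hodd ht1 h3 hev.
move: hA hB; set t2 := ((m - 3 * t1) %/ 2)%N; set T := ((m - 3) %/ 2)%N => hA hB.
have t2ge : (2 <= t2)%N by lia.
have Tge : (4 <= T)%N by lia.
have mR : m%:R = 3 * t1%:R + 2 * t2%:R :> R.
  by rewrite -hA natrD !natrM.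
have mR' : m%:R = 3 + 2 * T%:R :> R.
  by rewrite -hB natrD natrM.
have ev1 : forall y : R, ('X^4 - 'X^3 + (t1%:R - m%:R) *: 'X^2
                          + (m%:R - 3 * t1%:R) *: 'X
                          + (- 3 * t1%:R ^+ 2 + m%:R * t1%:R)%:P).[y] = Pq R t1 t2 y.
  by move=> y; rewrite horner4 /Pq mR; ring.
have ev2 : forall y : R, ('X^4 - 'X^3 + (1 - m%:R) *: 'X^2
                          + (m%:R - 3) *: 'X + (m%:R - 3)%:P).[y] = Pq R 1 T y.
  by move=> y; rewrite horner4 /Pq mR'; ring.
set p1 := ('X^4 - _ + _ + _ + _) in ev1.
set p2 := ('X^4 - _ + _ + _ + _) in ev2.
have mge : 11 <= m%:R :> R by rewrite -[11]/(11%:R) ler_nat.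
have big1 : 0 < p1.[m%:R] by rewrite ev1; apply: Pq_big; [exact: hA| |].
have big2 : forall Y, m%:R <= Y -> 0 < p2.[Y] by move=> Y hY; rewrite ev2; apply: Pq_big; [exact: hB| |].
have p1n : p1 != 0 by apply/eqP => e; move: big1; rewrite e horner0 ltxx.
have p2n : p2 != 0 by apply/eqP => e; move: (big2 _ (lexx _)); rewrite e horner0 ltxx.
pose a := Num.sqrt (t2%:R : R).
have a2 : a ^+ 2 = t2%:R by rewrite sqr_sqrtr ?ler0n.
have a0 : 0 <= a by rewrite sqrtr_ge0.
have t2R : 2 <= t2%:R :> R by rewrite -[2]/(2%:R) ler_nat.
have a1 : 1 < a by apply: sq_gt1 a0 a2 t2R.
have t2m : t2%:R <= m%:R :> R by rewrite ler_nat; lia.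
have am : a <= m%:R by apply: le_trans t2m; apply: ltW; apply: sq_lt a1 a2.
have pa : p1.[a] < 0.
  rewrite ev1.
  have -> : Pq R t1 t2 a = (a ^+ 2) ^+ 2 - a * a ^+ 2 - 2 * (t1%:R + t2%:R) * a ^+ 2
      + 2 * t2%:R * a + 2 * t1%:R * t2%:R by rewrite /Pq; ring.
  rewrite a2.
  have -> : (t2%:R : R) ^+ 2 - a * t2%:R - 2 * (t1%:R + t2%:R) * t2%:R + 2 * t2%:R * a
     + 2 * t1%:R * t2%:R = t2%:R * (a - t2%:R) by ring.
  have at2 : a < t2%:R by apply: sq_lt a1 a2.
  rewrite pmulr_rlt0 ?subr_lt0 //; lra.
have [x1 [ax1 rx1]] := @ivt_root _ _ _ _ am pa big1.
have [r1 [xr1 [rr1 mr1]]] := @largest_root _ _ _ p1n rx1.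
have r1g : 1 < r1 by apply: lt_le_trans xr1; apply: lt_trans ax1.
have TR : 4 <= T%:R :> R by rewrite -[4]/(4%:R) ler_nat.
have p3 : p2.[3] < 0.
  by rewrite ev2 Pq1_3; apply: lin_neg.
have le3m : 3 <= m%:R :> R by rewrite -[3]/(3%:R) ler_nat (leq_trans _ hm).
have [x2 [ax2 rx2]] := @ivt_root _ _ _ _ le3m p3 (big2 _ (lexx _)).
have [r2 [xr2 [rr2 mr2]]] := @largest_root _ _ _ p2n rx2.
have r2g : 3 < r2 by apply: lt_le_trans xr2.
have t2pos : (1 <= t2)%N by apply: leq_trans t2ge.
have Tpos : (1 <= T)%N by apply: leq_trans Tge.
have Pr1 : Pq R t1 t2 r1 = 0 by rewrite -ev1; apply/eqP.
have Pr2 : Pq R 1 T r2 = 0 by rewrite -ev2; apply/eqP.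
have r2g1 : 1 < r2 by apply: lt_trans r2g; rewrite -[1]/(1%:R) -[3]/(3%:R) ltr_nat.
exists r1, r2; split.
- split; first exact: (@root_eig R t1 t2 r1 t2pos r1g Pr1).
  move=> y ey; case: (leP y 1) => hy; first exact: le_trans hy (ltW r1g).
  by apply: mr1; rewrite /root ev1 (@eig_root R t1 t2 y t2pos hy ey) eqxx.
- split; first exact: (@root_eig R 1 T r2 Tpos r2g1 Pr2).
  move=> y ey; case: (leP y 1) => hy; first exact: le_trans hy (ltW r2g1).
  by apply: mr2; rewrite /root ev2 (@eig_root R 1 T y Tpos hy ey) eqxx.
- by split.
- by split.
rewrite ltNge; apply/negP => hle.
have hT : (3 + 2 * T = 3 * t1 + 2 * t2)%N by rewrite hA hB.
have n1 : p2.[r1] < 0.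
  by rewrite ev2; apply: (@diff_neg R t1 t2 T r1 hT ht1 t2ge (lt_le_trans r2g hle) Pr1).
have hb : m%:R <= r1 + m%:R by apply: ler_wpDl (ltW (lt_trans ltr01 r1g)) (lexx _).
have ab : r1 <= r1 + m%:R by rewrite lerDl ler0n.
have [x [rx xr]] := @ivt_root _ _ _ _ ab n1 (big2 _ hb).
have := mr2 _ xr => xx2.
by have := lt_le_trans rx (le_trans xx2 hle); rewrite ltxx.
Qed.
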